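(* Let $n\ge1$, $\boldsymbol\mu\in\mathcal S_n^\uparrow$, $\boldsymbol\xi\in\mathbb R^n$, $\mathbf y=\boldsymbol\mu+\boldsymbol\xi$ and $\hat{\boldsymbol\mu}=\Pi_{\mathcal S_n^\uparrow}(\mathbf y)$. Let $(\hat T_1,\dots,\hat T_{\hat k})$, $\hat k=k(\hat{\boldsymbol\mu})$, be the partition of $\{1,\dots,n\}$ into the maximal sets of consecutive indices on which $\hat{\boldsymbol\mu}$ is constant. Then $$\|\hat{\boldsymbol\mu}-\boldsymbol\mu\|_2^2\le\sum_{j=1}^{\hat k}\big\|\Pi_{\mathcal S^\downarrow_{|\hat T_j|}}(\boldsymbol\xi_{\hat T_j})\big\|_2^2 .$$
   Context: $\mathcal S_m^\uparrow=\{\mathbf u\in\mathbb R^m:u_1\le\dots\le u_m\}$, $\mathcal S_m^\downarrow=-\mathcal S_m^\uparrow$ (nonincreasing sequences), with $\mathcal S_1^\uparrow=\mathbb R$. $\Pi_K$ is the Euclidean projection onto $K$. For $T=\{t_1<\dots<t_{|T|}\}$, $\boldsymbol\xi_T=(\xi_{t_1},\dots,\xi_{t_{|T|}})^T$. $k(\mathbf u)$ is the number of distinct coordinates of $\mathbf u$. *)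

(* Defs.v *)
(* vectors of R^m are sequences of length m over a real field. *)
From HB Require Import structures.
From mathcomp Require Import all_boot all_order all_algebra.
From Stdlib Require Import ClassicalEpsilon.
Set Implicit Arguments. Unset Strict Implicit. Unset Printing Implicit Defensive.
Import Order.TTheory GRing.Theory Num.Theory.
Local Open Scope ring_scope.

Section Defs.
Variable R : realFieldType.

Definition vadd (u v : seq R) : seq R := [seq a.1 + a.2 | a <- zip u v].
Definition vsub (u v : seq R) : seq R := [seq a.1 - a.2 | a <- zip u v].

Definition sqnorm (u : seq R) : R := \sum_(x <- u) x ^+ 2.

Definition Sup (m : nat) (u : seq R) : Prop := size u = m /\ sorted <=%R u.
Definition Sdown (m : nat) (u : seq R) : Prop := size u = m /\ sorted >=%R u.

Definition isProj (K : seq R -> Prop) (y p : seq R) : Prop :=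
  K p /\ forall v, K v -> sqnorm (vsub y p) <= sqnorm (vsub y v).

(* Pi_K(y) (the projection onto the closed convex cones used here exists and is unique) *)
Definition proj (K : seq R -> Prop) (y : seq R) : seq R :=
  epsilon (inhabits y) (isProj K y).

Fixpoint runs_aux (x : R) (c : nat) (s : seq R) : seq nat :=
  match s with
  | [::] => [:: c]
  | y :: t => if y == x then runs_aux x c.+1 t else c :: runs_aux y 1 t
  end.
Definition runs (s : seq R) : seq nat :=
  match s with [::] => [::] | x :: t => runs_aux x 1 t end.

End Defs.

(* Main.v *)
Require Import Defs.
From HB Require Import structures.
From mathcomp Require Import all_boot all_order all_algebra.
From mathcomp Require Import ring lra zify.
From Stdlib Require Import ClassicalEpsilon.
Set Implicit Arguments. Unset Strict Implicit. Unset Printing Implicit Defensive.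
Import Order.TTheory GRing.Theory Num.Theory.
Local Open Scope ring_scope.

Definition dot (R : realFieldType) (u v : seq R) : R := \sum_(a <- zip u v) a.1 * a.2.
Definition ssum (R : realFieldType) (u : seq R) : R := \sum_(x <- u) x.
Definition neg (R : realFieldType) (u : seq R) : seq R := map -%R u.

Lemma take_zip (A B : Type) k (a : seq A) (b : seq B) :
  take k (zip a b) = zip (take k a) (take k b).
Proof. elim: a b k => [|x a IH]. by move=> [|y b] [|k] /=. by move=> [|y b] [|k] //=; rewrite IH. Qed.
Lemma drop_zip (A B : Type) k (a : seq A) (b : seq B) :
  drop k (zip a b) = zip (drop k a) (drop k b).
Proof. elim: a b k => [|x a IH]. by move=> [|y b] [|k] //=; case: (drop k b). move=> [|y b] [|k] //=; by [case: (drop k a) | rewrite IH]. Qed.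
Lemma zip_cat' (A B : Type) (a1 a2 : seq A) (b1 b2 : seq B) :
  size a1 = size b1 -> zip (a1 ++ a2) (b1 ++ b2) = zip a1 b1 ++ zip a2 b2.
Proof. by move=> h; rewrite zip_cat. Qed.

Section L.
Variable R : realFieldType.
Implicit Types u v w a b c : seq R.

Lemma sqnorm_cons x u : sqnorm (x :: u) = x ^+ 2 + sqnorm u.
Proof. by rewrite /sqnorm big_cons. Qed.
Lemma dot_cons x y u v : dot (x :: u) (y :: v) = x * y + dot u v.
Proof. by rewrite /dot /= big_cons. Qed.
Lemma ssum_cons x u : ssum (x :: u) = x + ssum u.
Proof. by rewrite /ssum big_cons. Qed.
Lemma sqnorm_nil : sqnorm [::] = 0 :> R. Proof. by rewrite /sqnorm big_nil. Qed.
Lemma dot_nil u : dot [::] u = 0. Proof. by case: u => [|x u]; rewrite /dot /= big_nil. Qed.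
Lemma dot_nilr u : dot u [::] = 0. Proof. by case: u => [|x u]; rewrite /dot /= big_nil. Qed.
Lemma ssum_nil : ssum [::] = 0 :> R. Proof. by rewrite /ssum big_nil. Qed.

Lemma sqnorm_dot u : sqnorm u = dot u u.
Proof. elim: u => [|x u IH]; rewrite ?sqnorm_nil ?dot_nil // sqnorm_cons dot_cons IH expr2 //. Qed.
Lemma dotC u v : dot u v = dot v u.
Proof. elim: u v => [|x u IH] [|y v]; rewrite ?dot_nil ?dot_nilr // !dot_cons IH mulrC //. Qed.
Lemma sqnorm_ge0 u : 0 <= sqnorm u.
Proof. elim: u => [|x u IH]; rewrite ?sqnorm_nil ?sqnorm_cons //; by rewrite addr_ge0 // sqr_ge0. Qed.

Lemma vsub_cons x y u v : vsub (x :: u) (y :: v) = (x - y) :: vsub u v.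
Proof. by []. Qed.
Lemma vadd_cons x y u v : vadd (x :: u) (y :: v) = (x + y) :: vadd u v.
Proof. by []. Qed.
Lemma size_vsub u v : size (vsub u v) = minn (size u) (size v).
Proof. by rewrite /vsub size_map size_zip. Qed.
Lemma size_vadd u v : size (vadd u v) = minn (size u) (size v).
Proof. by rewrite /vadd size_map size_zip. Qed.

Lemma dot_vsubl a b c : size a = size b -> dot (vsub a b) c = dot a c - dot b c.
Proof.
elim: a b c => [|x a IH] [|y b] [|z c] //= h; rewrite ?dot_nil ?dot_nilr ?subr0 //.
rewrite vsub_cons !dot_cons IH; [ring | by case: h].
Qed.
Lemma dot_vaddl a b c : size a = size b -> dot (vadd a b) c = dot a c + dot b c.
Proof.
elim: a b c => [|x a IH] [|y b] [|z c] //= h; rewrite ?dot_nil ?dot_nilr ?addr0 //.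
rewrite vadd_cons !dot_cons IH; [ring | by case: h].
Qed.
Lemma dot_vsubr a b c : size b = size c -> dot a (vsub b c) = dot a b - dot a c.
Proof. by move=> h; rewrite dotC dot_vsubl // !(dotC a). Qed.
Lemma sqnorm_vsub a b : size a = size b -> sqnorm (vsub a b) = dot a a - 2 * dot a b + dot b b.
Proof.
move=> h; rewrite sqnorm_dot dot_vsubl // !dot_vsubr ?size_vsub ?h ?minnn //.
rewrite (dotC b a); ring.
Qed.
Lemma dot_neg a b : dot (neg a) (neg b) = dot a b.
Proof. elim: a b => [|x a IH] [|y b]; rewrite /= ?dot_nil ?dot_nilr // !dot_cons IH; ring. Qed.
Lemma dot_negl a b : dot (neg a) b = - dot a b.
Proof. elim: a b => [|x a IH] [|y b]; rewrite /= ?dot_nil ?dot_nilr ?oppr0 // !dot_cons IH; ring. Qed.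
Lemma dot_negr a b : dot a (neg b) = - dot a b.
Proof. by rewrite dotC dot_negl dotC. Qed.
Lemma sqnorm_neg a : sqnorm (neg a) = sqnorm a.
Proof. by rewrite !sqnorm_dot dot_neg. Qed.
Lemma vsub_neg a b : vsub (neg a) (neg b) = neg (vsub a b).
Proof. elim: a b => [|x a IH] [|y b] //=; rewrite /vsub /= in IH *; rewrite IH opprD //. Qed.
Lemma negK a : neg (neg a) = a.
Proof. by rewrite /neg -map_comp map_id_in // => x _ /=; rewrite opprK. Qed.
Lemma size_neg a : size (neg a) = size a. Proof. by rewrite size_map. Qed.

Lemma dot_nseq u (c : R) : dot u (nseq (size u) c) = c * ssum u.
Proof. elim: u => [|x u IH]; rewrite ?dot_nil ?ssum_nil ?mulr0 //= dot_cons IH ssum_cons; ring. Qed.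

Lemma ssum_cat a b : ssum (a ++ b) = ssum a + ssum b.
Proof. by rewrite /ssum big_cat. Qed.
Lemma sqnorm_cat a b : sqnorm (a ++ b) = sqnorm a + sqnorm b.
Proof. by rewrite /sqnorm big_cat. Qed.
Lemma vsub_cat a1 a2 b1 b2 : size a1 = size b1 -> vsub (a1 ++ a2) (b1 ++ b2) = vsub a1 b1 ++ vsub a2 b2.
Proof. by move=> h; rewrite /vsub zip_cat // map_cat. Qed.
Lemma dot_cat a1 a2 b1 b2 : size a1 = size b1 -> dot (a1 ++ a2) (b1 ++ b2) = dot a1 b1 + dot a2 b2.
Proof. by move=> h; rewrite /dot zip_cat // big_cat. Qed.
Lemma take_vadd k a b : take k (vadd a b) = vadd (take k a) (take k b).
Proof. by rewrite /vadd -map_take take_zip. Qed.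
Lemma drop_vadd k a b : drop k (vadd a b) = vadd (drop k a) (drop k b).
Proof. by rewrite /vadd -map_drop drop_zip. Qed.
Lemma take_vsub k a b : take k (vsub a b) = vsub (take k a) (take k b).
Proof. by rewrite /vsub -map_take take_zip. Qed.
Lemma ssum_vsub a b : size a = size b -> ssum (vsub a b) = ssum a - ssum b.
Proof.
elim: a b => [|x a IH] [|y b] //= h; rewrite ?ssum_nil ?subr0 //.
rewrite /vsub /= in IH *; rewrite !ssum_cons IH; [ring|by case: h].
Qed.
Lemma ssum_nseq m (c : R) : ssum (nseq m c) = m%:R * c.
Proof. elim: m => [|m IH]; rewrite ?ssum_nil ?mul0r //= ssum_cons IH mulrSr; ring. Qed.
End L.
Section M.
Variable R : realFieldType.
Implicit Types u v w a b : seq R.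

Definition good (r : seq R) := ssum r = 0 /\ forall k, ssum (drop k r) <= 0.

Lemma dot_shift r w (b : R) : size r = size w ->
  dot r (map (fun x => x - b) w) = dot r w - b * ssum r.
Proof.
elim: r w => [|x r IH] [|y w] //= h; rewrite ?dot_nil ?ssum_nil ?mulr0 ?subr0 //.
rewrite !dot_cons IH ?ssum_cons; [ring | by case: h].
Qed.

Lemma abelA r w : size r = size w -> sorted <=%R w -> all (fun x => 0 <= x) w ->
  (forall k, ssum (drop k r) <= 0) -> dot r w <= 0.
Proof.
elim: r w => [|a r IH] [|b w] //=; rewrite ?dot_nil ?dot_nilr // => h hs /andP[hb hw] hk.
rewrite dot_cons -[dot r w](subrK (b * ssum r)) -dot_shift; last by case: h.
have h1 : dot r [seq x - b | x <- w] <= 0.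
  apply: IH.
  - by rewrite size_map; case: h.
  - rewrite sorted_map; apply: sub_sorted (path_sorted hs) => x y /=; by rewrite lerD2r.
  - have := order_path_min (@le_trans _ R) hs; rewrite all_map.
    by apply: sub_all => x /=; rewrite subr_ge0.
  - by move=> k; have := hk k.+1.
have h2 : a + ssum r <= 0 by have := hk 0; rewrite drop0 ssum_cons.
nra.
Qed.

Lemma abel r w : good r -> size r = size w -> sorted <=%R w -> dot r w <= 0.
Proof.
move=> [h0 hk] hs; case: w hs => [|b w] hsz hw; first by rewrite dot_nilr.
have -> : dot r (b :: w) = dot r (map (fun x => x - b) (b :: w)).
  by rewrite dot_shift // h0 mulr0 subr0.
apply: abelA => //; first by rewrite size_map.
- rewrite sorted_map; apply: sub_sorted hw => x y /=; by rewrite lerD2r.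
- rewrite /= subrr lexx /=; have := order_path_min (@le_trans _ R) hw; rewrite all_map.
  by apply: sub_all => x /=; rewrite subr_ge0.
Qed.

Lemma good_cat r1 r2 : good r1 -> good r2 -> good (r1 ++ r2).
Proof.
move=> [a1 b1] [a2 b2]; split; first by rewrite ssum_cat a1 a2 addr0.
move=> k; rewrite drop_cat; case: ifP => _; last exact: b2.
by rewrite ssum_cat a2 addr0.
Qed.

Lemma ssum_take_drop k (r : seq R) : ssum r = ssum (take k r) + ssum (drop k r).
Proof. by rewrite -ssum_cat cat_take_drop. Qed.

Lemma good_block y1 (L : nat) (c : R) : size y1 = L -> ssum y1 = L%:R * c ->
  (forall k, (k <= L)%N -> k%:R * c <= ssum (take k y1)) ->
  good (vsub y1 (nseq L c)).
Proof.
move=> hs hsum hk.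
have hr : ssum (vsub y1 (nseq L c)) = 0.
  by rewrite ssum_vsub ?size_nseq // ssum_nseq hsum subrr.
split => // k; have e := ssum_take_drop k (vsub y1 (nseq L c)); rewrite hr in e.
have -> : ssum (drop k (vsub y1 (nseq L c))) = - ssum (take k (vsub y1 (nseq L c))).
  by apply/eqP; rewrite -subr_eq0 opprK addrC -e.
rewrite oppr_le0.
case: (leqP k L) => hkL.
  rewrite take_vsub take_nseq // ssum_vsub ?size_nseq ?size_takel ?hs //.
  by rewrite ssum_nseq subr_ge0; apply: hk.
by rewrite take_oversize ?hr // size_vsub size_nseq hs minnn ltnW.
Qed.

Definition mean (y : seq R) (l : nat) : R := ssum (take l y) / l%:R.

Fixpoint amin (f : nat -> R) (n : nat) : nat :=
  match n with
  | 0 => 0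
  | m.+1 => let l := amin f m in
            if l == 0%N then 1%N else if f m.+1 <= f l then m.+1 else l
  end.

Lemma amin_S f m : amin f m.+1 =
  if amin f m == 0%N then 1%N else if f m.+1 <= f (amin f m) then m.+1 else amin f m.
Proof. by []. Qed.

Lemma amin_spec f n : (1 <= n)%N ->
  [/\ (1 <= amin f n <= n)%N,
      (forall k, (1 <= k <= n)%N -> f (amin f n) <= f k) &
      (forall k, (amin f n < k <= n)%N -> f (amin f n) < f k)].
Proof.
elim: n => [|m IH] // _.
case: m IH => [|m] IH.
  split => //= k hk; first by have -> : k = 1%N by lia.
  exfalso; lia.
have [h1 h2 h3] := IH isT.
rewrite (amin_S f m.+1); set l := amin f m.+1 in h1 h2 h3 *; clearbody l.
have -> : (l == 0%N) = false by apply/eqP; lia.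
case: ifP => hle.
  split; [lia | | by move=> k hk; exfalso; lia].
  move=> k hk; case: (ltnP k m.+2) => hk2.
    by apply: le_trans hle (h2 k _); lia.
  by have -> : k = m.+2 by lia.
split; first by lia.
  move=> k hk; case: (ltnP k m.+2) => hk2; first by apply: h2; lia.
  have -> : k = m.+2 by lia.
  by apply: ltW; rewrite ltNge hle.
move=> k hk; case: (ltnP k m.+2) => hk2; first by apply: h3; lia.
have -> : k = m.+2 by lia.
by rewrite ltNge hle.
Qed.

Definition Lof (y : seq R) := amin (mean y) (size y).

Fixpoint build (f : nat) (y : seq R) : seq R :=
  match f with
  | 0 => [::]
  | g.+1 => if y is [::] then [::] else
      nseq (Lof y) (mean y (Lof y)) ++ build g (drop (Lof y) y)
  end.

End M.
Section N.
Variable R : realFieldType.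
Implicit Types u v w a b y : seq R.

Lemma mean_mul y (k : nat) : (0 < k)%N -> mean y k * k%:R = ssum (take k y).
Proof. by move=> hk; rewrite /mean divfK // pnatr_eq0 -lt0n. Qed.

Lemma Lof_spec y : y != [::] ->
  [/\ (1 <= Lof y <= size y)%N,
      (forall k, (1 <= k <= size y)%N -> mean y (Lof y) <= mean y k) &
      (forall k, (Lof y < k <= size y)%N -> mean y (Lof y) < mean y k)].
Proof. by case: y => // x y _; apply: amin_spec. Qed.

Lemma block_cond y : y != [::] ->
  ssum (take (Lof y) y) = (Lof y)%:R * mean y (Lof y) /\
  forall k, (k <= Lof y)%N -> k%:R * mean y (Lof y) <= ssum (take k (take (Lof y) y)).
Proof.
move=> hy; have [h1 h2 _] := Lof_spec hy.
split; first by rewrite mulrC mean_mul //; lia.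
move=> k hk; rewrite take_takel //.
case: k hk => [|k] hk; first by rewrite mul0r take0 ssum_nil.
rewrite -mean_mul // mulrC ler_pM2r ?ltr0Sn //; apply: h2; lia.
Qed.

Lemma next_gt y : y != [::] -> drop (Lof y) y != [::] ->
  mean y (Lof y) < mean (drop (Lof y) y) (Lof (drop (Lof y) y)).
Proof.
move=> hy hy2; have [h1 _ h3] := Lof_spec hy; have [g1 _ _] := Lof_spec hy2.
set L := Lof y in h1 h3 *; set y2 := drop L y in hy2 g1 *; set L2 := Lof y2 in g1 *.
set c := mean y L; set c2 := mean y2 L2.
have hs2 : size y2 = (size y - L)%N by rewrite size_drop.
have hk := h3 (L + L2)%N ltac:(lia).
have e1 : ssum (take L y) = c * L%:R by rewrite mean_mul //; lia.
have e2 : ssum (take L2 y2) = c2 * L2%:R by rewrite mean_mul //; lia.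
have e3 : ssum (take (L + L2) y) = c * L%:R + c2 * L2%:R by rewrite takeD ssum_cat e1 e2.
have : c * (L + L2)%:R < c * L%:R + c2 * L2%:R.
  by rewrite -e3 -mean_mul //; [rewrite ltr_pM2r // ltr0n; lia | lia].
rewrite natrD => h.
have hL2 : 0 < L2%:R :> R by rewrite ltr0n; lia.
nra.
Qed.

Lemma build_head f y : (size y <= f)%N -> y != [::] ->
  exists t, build f y = mean y (Lof y) :: t.
Proof.
case: f => [|f]; first by case: y.
case: y => // x y _ _; have [h1 _ _] := Lof_spec (isT : x :: y != [::]).
rewrite /=; case: (Lof (x :: y)) h1 => // L _.
by eexists.
Qed.

Lemma sorted_nseq_cat (c : R) L s : sorted <=%R s ->
  (forall x t, s = x :: t -> c <= x) -> sorted <=%R (nseq L.+1 c ++ s).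
Proof.
move=> hs hc; rewrite /=; elim: L => [|L IH] /=; last by rewrite lexx IH.
by case: s hs hc => // x t hs hc /=; rewrite (hc x t).
Qed.

Lemma good_nil : good ([::] : seq R).
Proof. by split => [|k]; rewrite ?drop_nil ssum_nil. Qed.

Lemma build_kkt f y : (size y <= f)%N ->
  [/\ size (build f y) = size y, sorted <=%R (build f y),
      good (vsub y (build f y)) & dot (vsub y (build f y)) (build f y) = 0].
Proof.
elim: f y => [|f IH] y hy.
  by case: y hy => // _; split => //; [exact: good_nil | rewrite dot_nil].
case: y hy => [|x y0] hy; first by split => //; [exact: good_nil | rewrite dot_nil].
set y := x :: y0 in hy *.
have hne : y != [::] by [].
have [h1 _ _] := Lof_spec hne.
have [bs bc] := block_cond hne.
rewrite [build _ _]/=; fold y.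
set L := Lof y in h1 bs bc *; set c := mean y L.
set y2 := drop L y; set q2 := build f y2.
have hs2 : size y2 = (size y - L)%N by rewrite size_drop.
have [i1 i2 i3 i4] := IH y2 ltac:(lia).
rewrite -/q2 in i1 i2 i3 i4.
have htL : size (take L y) = L by rewrite size_takel; lia.
have gb : good (vsub (take L y) (nseq L c)) by apply: good_block.
have ev : vsub y (nseq L c ++ q2) = vsub (take L y) (nseq L c) ++ vsub y2 q2.
  by rewrite -vsub_cat ?cat_take_drop // size_nseq.
split.
- by rewrite size_cat size_nseq i1 hs2; lia.
- rewrite -(@prednK L); last by lia.
  apply: sorted_nseq_cat => // z t eq.
  have hy2 : y2 != [::] by apply/eqP => e; move: i1; rewrite e eq.
  have [t' ht'] := build_head (f := f) (y := y2) ltac:(lia) hy2.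
  rewrite -/q2 eq in ht'; case: ht' => -> _.
  apply: ltW; exact: next_gt.
- by rewrite ev; apply: good_cat.
- rewrite ev dot_cat ?size_vsub ?size_nseq ?htL ?minnn // i4 addr0.
  have := dot_nseq (vsub (take L y) (nseq L c)) c; rewrite size_vsub size_nseq htL minnn => ->.
  by case: gb => -> _; rewrite mulr0.
Qed.
End N.
Section P.
Variable R : realFieldType.
Implicit Types u v w y x p q : seq R.

Definition bp y := build (size y) y.

Lemma bp_kkt y : [/\ size (bp y) = size y, sorted <=%R (bp y),
      good (vsub y (bp y)) & dot (vsub y (bp y)) (bp y) = 0].
Proof. exact: build_kkt. Qed.

Lemma bp_isProj y : isProj (Sup (size y)) y (bp y).
Proof.
have [k1 k2 k3 k4] := bp_kkt y; set q := bp y in k1 k2 k3 k4 *.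
split => // v [hv1 hv2].
have ha := abel k3 (w := v) ltac:(by rewrite size_vsub k1 hv1 minnn) hv2.
rewrite dot_vsubl // in ha; rewrite dot_vsubl // in k4.
have hq := sqnorm_ge0 (vsub q v).
rewrite sqnorm_vsub ?k1 // in hq.
rewrite !sqnorm_vsub // ?k1 //.
lra.
Qed.

Definition mid p q : seq R := [seq (a.1 + a.2) / 2 | a <- zip p q].

Lemma path_mid (a b : R) p q : size p = size q -> path <=%R a p -> path <=%R b q ->
  path <=%R ((a + b) / 2) (mid p q).
Proof.
elim: p q a b => [|x p IH] [|y q] //= a b h /andP[h1 h2] /andP[h3 h4].
apply/andP; split; first lra.
by apply: IH => //; case: h.
Qed.

Lemma mid_identity y p q : size y = size p -> size p = size q ->
  4 * sqnorm (vsub y (mid p q)) =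
  2 * sqnorm (vsub y p) + 2 * sqnorm (vsub y q) - sqnorm (vsub p q).
Proof.
elim: y p q => [|z y IH] [|a p] [|b q] //= h1 h2; rewrite ?sqnorm_nil; first ring.
rewrite /vsub /mid /= in IH *.
rewrite !sqnorm_cons.
have e := IH p q ltac:(by case: h1) ltac:(by case: h2).
rewrite /mid in e. rewrite mulrDr e. by field.
Qed.

Lemma sqnorm_le0 p q : size p = size q -> sqnorm (vsub p q) <= 0 -> p = q.
Proof.
elim: p q => [|a p IH] [|b q] //= h; rewrite vsub_cons sqnorm_cons => hle.
have h1 := sqnorm_ge0 (vsub p q); have h2 := sqr_ge0 (a - b).
have e1 : (a - b) ^+ 2 = 0 by lra.
have e2 : sqnorm (vsub p q) <= 0 by lra.
move/eqP: e1; rewrite sqrf_eq0 subr_eq0 => /eqP ->.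
by rewrite (IH q) //; case: h.
Qed.

Lemma uniq_up m y p q : size y = m -> isProj (Sup m) y p -> isProj (Sup m) y q -> p = q.
Proof.
move=> hy [[hp1 hp2] hp] [[hq1 hq2] hq].
have hm : Sup m (mid p q).
  split; first by rewrite size_map size_zip hp1 hq1 minnn.
  case: p q hp1 hq1 hp2 hq2 {hp hq} => [|a p] [|b q] //= e1 e2 s1 s2.
  by apply: path_mid => //; rewrite -e1 in e2; case: e2.
have a1 := hp _ hm; have a2 := hq _ hm; have a3 := hp _ (conj hq1 hq2); have a4 := hq _ (conj hp1 hp2).
have e := mid_identity (p := p) (q := q) (y := y) ltac:(by rewrite hy hp1) ltac:(by rewrite hp1 hq1).
apply: sqnorm_le0; first by rewrite hp1 hq1.
lra.
Qed.

Lemma proj_eq K y p : isProj K y p -> (forall q, isProj K y q -> q = p) -> proj K y = p.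
Proof.
move=> hp hu; apply: hu; rewrite /proj; apply: epsilon_spec; by exists p.
Qed.

Lemma proj_up m y : size y = m -> proj (Sup m) y = bp y.
Proof.
move=> hy; have hb := bp_isProj y; rewrite hy in hb.
apply: proj_eq => // q hq; exact: uniq_up hy hq hb.
Qed.

Lemma sorted_negE v : sorted <=%R (neg v) = sorted >=%R v.
Proof. rewrite sorted_map; case: v => //= z v; apply: eq_path => a b /=; exact: lerN2. Qed.

Lemma Sdown_neg m v : Sdown m v <-> Sup m (neg v).
Proof. by rewrite /Sdown /Sup size_neg sorted_negE. Qed.

Lemma isProj_neg m x p : isProj (Sdown m) x p <-> isProj (Sup m) (neg x) (neg p).
Proof.
split => [[h1 h2]|[h1 h2]]; split.
- by apply/Sdown_neg.
- move=> v hv; rewrite !vsub_neg !sqnorm_neg -(negK v) vsub_neg sqnorm_neg.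
  by apply: h2; apply/Sdown_neg; rewrite negK.
- by apply/Sdown_neg.
- move=> v hv; have := h2 (neg v) (iffLR (Sdown_neg _ _) hv).
  by rewrite !vsub_neg !sqnorm_neg.
Qed.

Lemma proj_down m x : size x = m -> proj (Sdown m) x = neg (bp (neg x)).
Proof.
move=> hx; have hb := bp_isProj (neg x); rewrite size_neg hx in hb.
have hd : isProj (Sdown m) x (neg (bp (neg x))) by apply/isProj_neg; rewrite negK.
apply: proj_eq => // q /isProj_neg hq.
have hs : size (neg x) = m by rewrite size_neg.
by rewrite -(uniq_up hs hq hb) negK.
Qed.

Lemma proj_down_bound m x v : size x = m -> Sdown m v ->
  2 * dot x v - sqnorm v <= sqnorm (proj (Sdown m) x).
Proof.
move=> hx hv; rewrite proj_down // sqnorm_neg.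
have [k1 k2 k3 k4] := bp_kkt (neg x); set q := bp (neg x) in k1 k2 k3 k4 *.
have [hv1 hv2] := iffLR (Sdown_neg _ _) hv.
have hsz : size (neg x) = size (neg v) by rewrite size_neg hx -hv1.
have ha := abel k3 (w := neg v) ltac:(by rewrite size_vsub k1 minnn) hv2.
rewrite dot_vsubl ?k1 // dot_neg dot_negr in ha.
rewrite dot_vsubl ?k1 // dot_negl in k4.
have hq := sqnorm_ge0 (vsub q (neg v)).
rewrite sqnorm_vsub ?k1 // dot_negr dot_neg in hq.
rewrite !sqnorm_dot; lra.
Qed.
End P.
Section Q.
Variable R : realFieldType.
Implicit Types u v w y p q mu xi : seq R.

Lemma runs_aux_nseq (c : R) k m s : runs_aux c k (nseq m c ++ s) = runs_aux c (k + m) s.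
Proof. elim: m k => [|m IH] k /=; first by rewrite addn0. by rewrite eqxx IH addnS. Qed.

Lemma runs_nseq (c : R) L s : (forall z t, s = z :: t -> c < z) ->
  runs (nseq L.+1 c ++ s) = L.+1 :: runs s.
Proof.
move=> hs; rewrite /= runs_aux_nseq add1n.
case: s hs => // z t hs /=; have := hs z t erefl => hz.
by rewrite (gt_eqF hz).
Qed.

Lemma build_S f y : y != [::] ->
  build f.+1 y = nseq (Lof y) (mean y (Lof y)) ++ build f (drop (Lof y) y).
Proof. by case: y. Qed.

Lemma tail_gt f y : y != [::] -> (size y <= f.+1)%N ->
  forall z t, build f (drop (Lof y) y) = z :: t -> mean y (Lof y) < z.
Proof.
move=> hne hy z t eq; have [h1 _ _] := Lof_spec hne.
have [i1 _ _ _] := build_kkt (f := f) (y := drop (Lof y) y) ltac:(rewrite size_drop; lia).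
have hy2 : drop (Lof y) y != [::] by apply/eqP => e; move: i1; rewrite eq e.
have [t' ht'] := build_head (f := f) (y := drop (Lof y) y) ltac:(rewrite size_drop; lia) hy2.
rewrite eq in ht'; case: ht' => -> _; exact: next_gt.
Qed.

Lemma vsub_nseq_l (c : R) u : vsub (nseq (size u) c) u = map (fun x => c - x) u.
Proof. by elim: u => //= z u IH; rewrite vsub_cons IH. Qed.

Lemma block_ineq mu1 xi1 (c : R) : size mu1 = size xi1 -> sorted <=%R mu1 ->
  good (vsub (vadd mu1 xi1) (nseq (size mu1) c)) ->
  sqnorm (vsub (nseq (size mu1) c) mu1) <= sqnorm (proj (Sdown (size xi1)) xi1).
Proof.
move=> hs hm hg; set L := size mu1 in hg *; set N := nseq L c.
set d := vsub N mu1.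
have hd : Sdown (size xi1) d.
  split; first by rewrite /d /N /L size_vsub size_nseq minnn hs.
  rewrite /d /N /L vsub_nseq_l sorted_map; apply: sub_sorted hm => a b /= h; lra.
have hb := proj_down_bound (erefl (size xi1)) hd.
have hsN : size N = L by rewrite size_nseq.
have hsy : size (vadd mu1 xi1) = L by rewrite size_vadd -hs minnn.
have ha := abel hg (w := mu1) ltac:(by rewrite size_vsub hsy hsN minnn) hm.
rewrite dot_vsubl ?hsy // dot_vaddl // in ha.
have hN : dot (vsub (vadd mu1 xi1) N) N = 0.
  have := dot_nseq (vsub (vadd mu1 xi1) N) c.
  rewrite size_vsub hsy hsN minnn -/N => ->; by case: hg => -> _; rewrite mulr0.
rewrite dot_vsubl ?hsy // dot_vaddl // in hN.
have e1 : dot xi1 d = dot xi1 N - dot xi1 mu1 by rewrite dot_vsubr.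
have e2 : sqnorm d = dot N N - 2 * dot N mu1 + dot mu1 mu1 by rewrite sqnorm_vsub.
rewrite e1 e2 in hb; rewrite e2.
rewrite (dotC mu1 N) in hN; lra.
Qed.

Lemma vsub_nil u : vsub [::] u = [::]. Proof. by case: u. Qed.
Lemma build_nil f : build f [::] = [::] :> seq R. Proof. by case: f. Qed.

Lemma main_ind f mu xi : size mu = size xi -> (size xi <= f)%N -> sorted <=%R mu ->
  sqnorm (vsub (build f (vadd mu xi)) mu) <=
  \sum_(b <- reshape (runs (build f (vadd mu xi))) xi) sqnorm (proj (Sdown (size b)) b).
Proof.
elim: f mu xi => [|f IH] mu xi hs hf hm.
  by rewrite /= big_nil vsub_nil sqnorm_nil.
case: mu hs hm => [|m0 mu0] hs hm; first by case: xi hs hf => // _ _; rewrite /= big_nil vsub_nil sqnorm_nil.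
case: xi hs hf => [|x0 xi0] // hs hf.
set mu := m0 :: mu0 in hs hm *; set xi := x0 :: xi0 in hs hf *.
set y := vadd mu xi.
have hne : y != [::] by [].
have hsy : size y = size xi by rewrite /y size_vadd hs minnn.
have [h1 _ _] := Lof_spec hne.
have [bs bc] := block_cond hne.
rewrite build_S //.
set L := Lof y in h1 bs bc *; set c := mean y L; set q2 := build f (drop L y).
have hrun : runs (nseq L c ++ q2) = L :: runs q2.
  rewrite -(@prednK L); last by lia.
  by apply: runs_nseq; apply: tail_gt => //; rewrite hsy.
rewrite hrun /= big_cons.
have hLm : (L <= size mu)%N by rewrite hs -hsy; lia.
have ev : vsub (nseq L c ++ q2) mu = vsub (nseq L c) (take L mu) ++ vsub q2 (drop L mu).
  by rewrite -{1}(cat_take_drop L mu) vsub_cat // size_nseq size_takel.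
rewrite ev sqnorm_cat.
have hy2 : drop L y = vadd (drop L mu) (drop L xi) by rewrite drop_vadd.
apply: lerD.
- have htm : size (take L mu) = L by rewrite size_takel.
  have htx : size (take L xi) = L by rewrite size_takel // -hs.
  have := @block_ineq (take L mu) (take L xi) c ltac:(by rewrite htm htx)
            (take_sorted _ hm).
  rewrite htm htx; apply.
  rewrite -take_vadd -/y; apply: good_block => //.
  by rewrite size_takel // hsy -hs.
- rewrite /q2 hy2; apply: IH; rewrite ?size_drop ?hs //; last exact: drop_sorted.
  lia.
Qed.
End Q.

Theorem mainTheorem6 (R : realFieldType) (n : nat) (mu xi : seq R) :
  (1 <= n)%N -> Sup n mu -> size xi = n ->
  let y := vadd mu xi in
  let muhat := proj (Sup n) y in
  sqnorm (vsub muhat mu) <=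
    \sum_(b <- reshape (runs muhat) xi) sqnorm (proj (Sdown (size b)) b).
Proof.
move=> _ [hm1 hm2] hx /=.
have hy : size (vadd mu xi) = n by rewrite size_vadd hm1 hx minnn.
rewrite proj_up // /bp hy.
apply: main_ind => //; by rewrite ?hm1 ?hx.
Qed.
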